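(* Let $I$ be the set of inputs and $O$ be the set of outputs, and let $\Phi_{\mathrm{LTL}}$ be the LTL formula derived from a given $\mathrm{CTL}^*$ formula $\Phi_{\mathrm{CTL}^*}$ by the construction described in the context. Then: $\Phi_{\mathrm{CTL}^*}$ is realisable $\Leftrightarrow$ $\Phi_{\mathrm{LTL}}$ is realisable.
   Context: Realisability is with respect to Moore systems (outputs are delayed with respect to inputs); $\Phi_{\mathrm{CTL}^*}$ is a $\mathrm{CTL}^*$ state formula over inputs $I$ and outputs $O$ in positive normal form. The derivation of $\Phi_{\mathrm{LTL}}$ is as follows. Let $F_{\mathit{exist}}$ be the set of existentially quantified state subformulas $\mathsf{E}\varphi$ of $\Phi_{\mathrm{CTL}^*}$ and $F_{\mathit{univ}}$ the set of universally quantified ones $\mathsf{A}\varphi$. Let $k$ be the total number of states of the nondeterministic Büchi word automata for the path formulas of the existential subformulas. Introduce new outputs: for each $\mathsf{E}\varphi\in F_{\mathit{exist}}$ an integer-valued output $v_{\mathsf{E}\varphi}\in\{0,\dots,k\}$; for each $j\in\{1,\dots,k\}$ an output $d_j$ whose value is an input valuation in $2^I$ (a direction), where $\mathsf{G}\, d_j$ means that along the path the input always equals the direction given by $d_j$; and for each $\mathsf{A}\varphi\in F_{\mathit{univ}}$ a Boolean output $p_{\mathsf{A}\varphi}$. For a path formula $\varphi$, let $\varphi'$ be obtained by replacing every subformula $\mathsf{E}\psi$ by $v_{\mathsf{E}\psi}\neq 0$ and every subformula $\mathsf{A}\psi$ by $p_{\mathsf{A}\psi}$; let $\Phi'$ be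 obtained likewise from $\Phi_{\mathrm{CTL}^*}$. Then $\Phi_{\mathrm{LTL}} = \Phi' \wedge \bigwedge_{\mathsf{E}\varphi\in F_{\mathit{exist}}}\bigwedge_{j\in\{1,\dots,k\}} \mathsf{G}\big[v_{\mathsf{E}\varphi}=j \rightarrow (\mathsf{G}\, d_j \rightarrow \varphi')\big] \wedge \bigwedge_{\mathsf{A}\varphi\in F_{\mathit{univ}}} \mathsf{G}\big[p_{\mathsf{A}\varphi}\rightarrow \varphi'\big]$, with inputs $I$ and outputs $O$ together with the new outputs. *)

(* Defs.v *)
From HB Require Import structures.
From mathcomp Require Import all_boot.
Set Implicit Arguments. Unset Strict Implicit. Unset Printing Implicit Defensive.

Section Defs.
Variables (I O : finType).

Definition inval := {ffun I -> bool}.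
Definition outval := {ffun O -> bool}.

Inductive ctl : Type :=
| CTrue | CFalse
| CIn of I | CNIn of I
| COut of O | CNOut of O
| CAnd of ctl & ctl | COr of ctl & ctl
| CX of ctl | CU of ctl & ctl | CR of ctl & ctl
| CE of ctl | CA of ctl.

Lemma ctl_eq_dec (x y : ctl) : {x = y} + {x <> y}.
Proof. decide equality; exact: eq_comparable. Qed.
HB.instance Definition _ := hasDecEq.Build ctl (compareP ctl_eq_dec).

Fixpoint is_state (f : ctl) : bool :=
  match f with
  | CTrue | CFalse | CIn _ | CNIn _ | COut _ | CNOut _ => true
  | CAnd a b | COr a b => is_state a && is_state b
  | CE _ | CA _ => true
  | _ => false
  end.

Fixpoint subformulas (f : ctl) : seq ctl :=
  f :: match f with
       | CAnd a b | COr a b | CU a b | CR a b => subformulas a ++ subformulas b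
       | CX a | CE a | CA a => subformulas a
       | _ => [::]
       end.

Definition isE (f : ctl) := if f is CE _ then true else false.
Definition isA (f : ctl) := if f is CA _ then true else false.
Definition path_of (f : ctl) := match f with CE p | CA p => p | _ => f end.

Definition F_exist (Phi : ctl) := undup [seq f <- subformulas Phi | isE f].
Definition F_univ (Phi : ctl) := undup [seq f <- subformulas Phi | isA f].

Record moore (X : Type) : Type := Moore {
  mstate : Type;
  minit : mstate;
  mtrans : mstate -> inval -> mstate;
  mout : mstate -> X }.
Arguments minit {X} m.
Arguments mtrans {X} m _ _.
Arguments mout {X} m _.

(* output produced at time t along the input sequence pi: it depends only on
   the inputs pi 0, ..., pi (t-1) (Moore) *)
Definition out_at X (M : moore X) (pi : nat -> inval) (t : nat) : X :=
  mout M (foldl (mtrans M) (minit M) (mkseq pi t)).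

(* ---------- CTL* semantics on the computation tree of M ----------
   A position is (pi, t): the tree node reached by pi 0 .. pi (t-1); the
   letter at time t is (pi t, output at that node). *)
Fixpoint csat (M : moore outval) (f : ctl) (pi : nat -> inval) (t : nat) : Prop :=
  match f with
  | CTrue => True
  | CFalse => False
  | CIn i => pi t i
  | CNIn i => ~~ pi t i
  | COut o => out_at M pi t o
  | CNOut o => ~~ out_at M pi t o
  | CAnd a b => csat M a pi t /\ csat M b pi t
  | COr a b => csat M a pi t \/ csat M b pi t
  | CX a => csat M a pi t.+1
  | CU a b => exists j, t <= j /\ csat M b pi j /\
                        forall m, t <= m -> m < j -> csat M a pi m
  | CR a b => forall j, t <= j ->
                csat M b pi j \/ exists m, [/\ t <= m, m < j & csat M a pi m]
  | CE a => exists pi', (forall m, m < t -> pi' m = pi m) /\ csat M a pi' t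
  | CA a => forall pi', (forall m, m < t -> pi' m = pi m) -> csat M a pi' t
  end.

Definition ctl_realisable (Phi : ctl) : Prop :=
  exists M : moore outval, forall pi, csat M Phi pi 0.

Inductive ltl (L : Type) : Type :=
| LAtom of (L -> bool)
| LNot of ltl L
| LAnd of ltl L & ltl L | LOr of ltl L & ltl L
| LX of ltl L | LU of ltl L & ltl L | LR of ltl L & ltl L.

Fixpoint lsat L (f : ltl L) (w : nat -> L) (t : nat) : Prop :=
  match f with
  | LAtom p => p (w t)
  | LNot a => ~ lsat a w t
  | LAnd a b => lsat a w t /\ lsat b w t
  | LOr a b => lsat a w t \/ lsat b w t
  | LX a => lsat a w t.+1
  | LU a b => exists j, t <= j /\ lsat b w j /\ forall m, t <= m -> m < j -> lsat a w m
  | LR a b => forall j, t <= j ->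
                lsat b w j \/ exists m, [/\ t <= m, m < j & lsat a w m]
  end.

Definition LTrue L : ltl L := LAtom (fun _ => true).
Definition LFalse L : ltl L := LAtom (fun _ => false).
Definition LImp L (a b : ltl L) : ltl L := LOr (LNot a) b.
Definition LG L (a : ltl L) : ltl L := LR (LFalse L) a.
Definition LBigAnd L (s : seq (ltl L)) : ltl L := foldr (@LAnd L) (LTrue L) s.

Definition ltl_realisable X (Phi : ltl (inval * X)) : Prop :=
  exists M : moore X, forall pi, lsat Phi (fun t => (pi t, out_at M pi t)) 0.

(* Translation of a CTL* formula into LTL, given how to read inputs, outputs
   and (the truth of) the quantified state subformulas E psi / A psi off a letter *)
Fixpoint tr L (inp : L -> inval) (out : L -> outval) (st : ctl -> L -> bool)
  (f : ctl) : ltl L :=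
  match f with
  | CTrue => LTrue L
  | CFalse => LFalse L
  | CIn i => LAtom (fun l => inp l i)
  | CNIn i => LAtom (fun l => ~~ inp l i)
  | COut o => LAtom (fun l => out l o)
  | CNOut o => LAtom (fun l => ~~ out l o)
  | CAnd a b => LAnd (tr inp out st a) (tr inp out st b)
  | COr a b => LOr (tr inp out st a) (tr inp out st b)
  | CX a => LX (tr inp out st a)
  | CU a b => LU (tr inp out st a) (tr inp out st b)
  | CR a b => LR (tr inp out st a) (tr inp out st b)
  | CE a => LAtom (st (CE a))
  | CA a => LAtom (st (CA a))
  end.

Record nbw (L : Type) : Type := NBW {
  nstate : finType;
  ninit : pred nstate;
  ntrans : nstate -> L -> nstate -> bool;
  nacc : pred nstate }.
Arguments ninit {L} n _.
Arguments ntrans {L} n _ _ _.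
Arguments nacc {L} n _.

Definition nbw_accepts L (A : nbw L) (w : nat -> L) : Prop :=
  exists r : nat -> nstate A,
    [/\ ninit A (r 0), forall t, ntrans A (r t) (w t) (r t.+1)
      & forall n, exists2 m, n <= m & nacc A (r m)].

(* Alphabet of the NBW for a path formula: input valuation, output valuation,
   and a valuation of the (maximal) state subformulas, treated as atoms. *)
Definition sletter := (inval * (outval * (ctl -> bool)))%type.

Definition skeleton (p : ctl) : ltl sletter :=
  tr (fun l : sletter => l.1) (fun l => l.2.1) (fun g l => l.2.2 g) p.

Definition nbw_for (A : nbw sletter) (p : ctl) : Prop :=
  forall w, nbw_accepts A w <-> lsat (skeleton p) w 0.

Definition kstates (Phi : ctl) (aut : ctl -> nbw sletter) : nat :=
  \sum_(e <- F_exist Phi) #|nstate (aut e)|.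

(* New outputs, for a given k:
   - original outputs O,
   - v_e in {0..k} for each E-subformula e (indexed by formulas),
   - directions d_j in 2^I, j in {1..k} (represented by 'I_k, d_j = d (j-1)),
   - Boolean p_a for each A-subformula a (indexed by formulas). *)
Definition extout (k : nat) :=
  (outval * ((ctl -> 'I_k.+1) * (('I_k -> inval) * (ctl -> bool))))%type.

Section Construction.
Variables (Phi : ctl) (aut : ctl -> nbw sletter).
Let k := kstates Phi aut.
Let L := (inval * extout k)%type.

Definition x_out (l : L) : outval := l.2.1.
Definition x_v (l : L) (e : ctl) : nat := l.2.2.1 e.
Definition x_d (l : L) (j : 'I_k) : inval := l.2.2.2.1 j.
Definition x_p (l : L) (a : ctl) : bool := l.2.2.2.2 a.

Definition x_st (g : ctl) (l : L) : bool :=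
  match g with
  | CE _ => x_v l g != 0
  | CA _ => x_p l g
  | _ => false
  end.

Definition prime (f : ctl) : ltl L := tr (fun l : L => l.1) x_out x_st f.

Definition Phi_LTL : ltl L :=
  LAnd (prime Phi)
   (LAnd
     (LBigAnd [seq LBigAnd
        [seq LG (LImp (LAtom (fun l : L => x_v l e == (nat_of_ord j).+1))
                      (LImp (LG (LAtom (fun l : L => l.1 == x_d l j)))
                            (prime (path_of e))))
        | j : 'I_k <- enum 'I_k]
      | e <- F_exist Phi])
     (LBigAnd [seq LG (LImp (LAtom (fun l : L => x_p l a)) (prime (path_of a)))
              | a <- F_univ Phi])).
End Construction.
End Defs.

(* Main.v *)
Require Import Defs.
From HB Require Import structures.
From mathcomp Require Import all_boot zify.
From Stdlib Require Import ClassicalEpsilon FunctionalExtensionality.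
Set Implicit Arguments. Unset Strict Implicit. Unset Printing Implicit Defensive.
Section Gen.
Variables (I O : finType).

Lemma lsat_shift L (f : ltl L) (w : nat -> L) t s :
  lsat f w (t + s) <-> lsat f (fun i => w (t + i)) s.
Proof.
elim: f s => [p|a IH|a IHa b IHb|a IHa b IHb|a IH|a IHa b IHb|a IHa b IHb] s /=.
- by [].
- by rewrite IH.
- by rewrite IHa IHb.
- by rewrite IHa IHb.
- by rewrite -addnS IH.
- split.
  + move=> [j [hj [hb ha]]]; exists (j - t); split; first lia.
    split; first by rewrite -IHb; have -> : t + (j - t) = j by lia.
    move=> m h1 h2; rewrite -IHa; apply: ha; lia.
  + move=> [j [hj [hb ha]]]; exists (t + j); split; first lia.
    split; first by rewrite IHb.
    move=> m h1 h2; have -> : m = t + (m - t) by lia.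
    rewrite IHa; apply: ha; lia.
- split.
  + move=> H j hj; case: (H (t + j)); first lia.
    * by rewrite IHb; left.
    * move=> [m [h1 h2 h3]]; right; exists (m - t); split; try lia.
      by rewrite -IHa; have -> : t + (m - t) = m by lia.
  + move=> H j hj; have -> : j = t + (j - t) by lia.
    case: (H (j - t)); first lia.
    * by rewrite -IHb; left.
    * move=> [m [h1 h2 h3]]; right; exists (t + m); split; try lia.
      by rewrite IHa.
Qed.

Lemma LG_sat L (a : ltl L) w t : lsat (LG a) w t <-> forall j, t <= j -> lsat a w j.
Proof.
rewrite /LG /=; split.
- by move=> H j hj; case: (H j hj) => // [[m [_ _]]].
- by move=> H j hj; left; apply: H.
Qed.

Lemma LBigAnd_map L (T : Type) (F : T -> ltl L) (l : seq T) w t :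
  lsat (LBigAnd (map F l)) w t <-> forall x, List.In x l -> lsat (F x) w t.
Proof.
elim: l => [|x l IH] /=; first by split.
rewrite IH; split.
- by move=> [h1 h2] y [<-|hy] //; apply: h2.
- by move=> H; split; [apply: H; left | move=> y hy; apply: H; right].
Qed.

Lemma subformulas_self (f : ctl I O) : f \in subformulas f.
Proof. by case: f => *; rewrite /= inE eqxx. Qed.

Lemma subformulas_trans (f g h : ctl I O) :
  g \in subformulas f -> h \in subformulas g -> h \in subformulas f.
Proof.
elim: f g => /= [||i|i|o|o|a IHa b IHb|a IHa b IHb|a IH|a IHa b IHb|a IHa b IHb|a IH|a IH] g;
  rewrite in_cons => /orP [/eqP -> //|]; rewrite ?in_nil ?mem_cat ?in_cons //.
all: try (move=> /orP [H1|H1] H2; apply/orP; right; rewrite mem_cat; apply/orP;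
   [left; exact: IHa H1 H2 | right; exact: IHb H1 H2]).
all: by move=> H1 H2; apply/orP; right; exact: IH H1 H2.
Qed.

Variables (L : Type) (inp : L -> inval I) (out : L -> outval O)
  (st : ctl I O -> L -> bool) (w : nat -> L) (M : moore I (outval O)) (pi : nat -> inval I).
Hypothesis Hinp : forall t, inp (w t) = pi t.
Hypothesis Hout : forall t, out (w t) = out_at M pi t.

Lemma tr_imp (f : ctl I O) :
  (forall g, g \in subformulas f -> isE g || isA g -> forall t, st g (w t) -> csat M g pi t) ->
  forall t, lsat (tr inp out st f) w t -> csat M f pi t.
Proof.
elim: f => /= [||i|i|o|o|a IHa b IHb|a IHa b IHb|a IH|a IHa b IHb|a IHa b IHb|a IH|a IH] Hst t //.
- by rewrite Hinp.
- by rewrite Hinp.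
- by rewrite Hout.
- by rewrite Hout.
- move=> [h1 h2]; split; [apply: IHa h1|apply: IHb h2] => g hg; apply: Hst;
    by rewrite inE mem_cat hg ?orbT.
- move=> [h1|h2]; [left; apply: IHa h1|right; apply: IHb h2] => g hg; apply: Hst;
    by rewrite inE mem_cat hg ?orbT.
- by apply: IH => g hg; apply: Hst; rewrite inE hg orbT.
- have HA : forall t, lsat (tr inp out st a) w t -> csat M a pi t.
    by apply: IHa => g hg; apply: Hst; rewrite inE mem_cat hg ?orbT.
  have HB : forall t, lsat (tr inp out st b) w t -> csat M b pi t.
    by apply: IHb => g hg; apply: Hst; rewrite inE mem_cat hg ?orbT.
  move=> [j [hj [hb ha]]]; exists j; split => //; split; first exact: HB.
  by move=> m h1 h2; apply: HA; apply: ha.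
- have HA : forall t, lsat (tr inp out st a) w t -> csat M a pi t.
    by apply: IHa => g hg; apply: Hst; rewrite inE mem_cat hg ?orbT.
  have HB : forall t, lsat (tr inp out st b) w t -> csat M b pi t.
    by apply: IHb => g hg; apply: Hst; rewrite inE mem_cat hg ?orbT.
  move=> H j hj; case: (H j hj) => [h|[m [h1 h2 h3]]]; first by left; apply: HB.
  by right; exists m; split => //; apply: HA.
- by move=> h; apply: (Hst (CE a)) => //; rewrite inE eqxx.
- by move=> h; apply: (Hst (CA a)) => //; rewrite inE eqxx.
Qed.

Lemma tr_rev (f : ctl I O) :
  (forall g, g \in subformulas f -> isE g || isA g -> forall t, csat M g pi t -> st g (w t)) ->
  forall t, csat M f pi t -> lsat (tr inp out st f) w t.
Proof.
elim: f => /= [||i|i|o|o|a IHa b IHb|a IHa b IHb|a IH|a IHa b IHb|a IHa b IHb|a IH|a IH] Hst t //.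
- by rewrite Hinp.
- by rewrite Hinp.
- by rewrite Hout.
- by rewrite Hout.
- move=> [h1 h2]; split; [apply: IHa h1|apply: IHb h2] => g hg; apply: Hst;
    by rewrite inE mem_cat hg ?orbT.
- move=> [h1|h2]; [left; apply: IHa h1|right; apply: IHb h2] => g hg; apply: Hst;
    by rewrite inE mem_cat hg ?orbT.
- by apply: IH => g hg; apply: Hst; rewrite inE hg orbT.
- have HA : forall t, csat M a pi t -> lsat (tr inp out st a) w t.
    by apply: IHa => g hg; apply: Hst; rewrite inE mem_cat hg ?orbT.
  have HB : forall t, csat M b pi t -> lsat (tr inp out st b) w t.
    by apply: IHb => g hg; apply: Hst; rewrite inE mem_cat hg ?orbT.
  move=> [j [hj [hb ha]]]; exists j; split => //; split; first exact: HB.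
  by move=> m h1 h2; apply: HA; apply: ha.
- have HA : forall t, csat M a pi t -> lsat (tr inp out st a) w t.
    by apply: IHa => g hg; apply: Hst; rewrite inE mem_cat hg ?orbT.
  have HB : forall t, csat M b pi t -> lsat (tr inp out st b) w t.
    by apply: IHb => g hg; apply: Hst; rewrite inE mem_cat hg ?orbT.
  move=> H j hj; case: (H j hj) => [h|[m [h1 h2 h3]]]; first by left; apply: HB.
  by right; exists m; split => //; apply: HA.
- by move=> h; apply: (Hst (CE a)) => //; rewrite inE eqxx.
- by move=> h; apply: (Hst (CA a)) => //; rewrite inE eqxx.
Qed.
End Gen.
Definition bP (P : Prop) : bool :=
  if excluded_middle_informative P then true else false.
Lemma bPP (P : Prop) : reflect P (bP P).
Proof. by rewrite /bP; case: excluded_middle_informative => h; constructor. Qed.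

Section Strat.
Variables (I : finType) (S : Type) (A : nbw S) (lt : seq (inval I) -> inval I -> S).
Local Notation Q := (nstate A).
Local Notation pos := (seq (inval I) * Q)%type.
Definition d0 : inval I := [ffun _ => false].

Definition edge (x y : pos) : Prop :=
  exists a, y.1 = rcons x.1 a /\ @ntrans _ A x.2 (lt x.1 a) y.2.
Definition valid (p : nat -> pos) := forall i, edge (p i) (p i.+1).
Definition infacc (p : nat -> pos) := forall n, exists2 m, n <= m & @nacc _ A (p m).2.
Definition Win x := exists p, [/\ p 0 = x, valid p & infacc p].
Fixpoint reach n x : Prop :=
  if n is n'.+1 then exists y, edge x y /\ reach n' y else @nacc _ A x.2 /\ Win x.

Lemma Win_tail p m : valid p -> infacc p -> Win (p m).
Proof.
move=> hv ha; exists (fun i => p (m + i)); split; first by rewrite addn0.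
- by move=> i; rewrite addnS; apply: hv.
- move=> n; have [m' h1 h2] := ha (m + n); exists (m' - m); first lia.
  by have -> : m + (m' - m) = m' by lia.
Qed.

Lemma Win_reach x : Win x -> exists n, reach n x.
Proof.
move=> [p [p0 hv ha]]; have [m _ hm] := ha 0.
have key : forall n i, @nacc _ A (p (i + n)).2 -> reach n (p i).
  elim=> [|n IH] i h /=.
  - by split; [rewrite addn0 in h | exact: Win_tail].
  - by exists (p i.+1); split; [exact: hv | apply: IH; rewrite addSnnS].
by exists m; rewrite -p0; apply: key; rewrite add0n.
Qed.

Lemma edge_Win x y : edge x y -> Win y -> Win x.
Proof.
move=> he [p [p0 hv ha]].
exists (fun i => if i is i'.+1 then p i' else x); split => //.
- by case=> [|i] /=; [rewrite p0 | exact: hv].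
- move=> n; have [m h1 h2] := ha n; by exists m.+1 => //; apply: leqW.
Qed.

Lemma reach_Win n x : reach n x -> Win x.
Proof.
elim: n x => [|n IH] x /=; first by case.
by move=> [y [he hy]]; apply: edge_Win he (IH _ hy).
Qed.

Definition rk x : nat :=
  match excluded_middle_informative (exists n, bP (reach n x)) with
  | left H => ex_minn H | right _ => 0 end.

Lemma rk_spec x : Win x -> reach (rk x) x /\ forall n, reach n x -> rk x <= n.
Proof.
move=> hw; rewrite /rk; case: excluded_middle_informative => [H|H].
- case: ex_minnP => m /bPP hm hmin; split => // n hn; apply: hmin; exact/bPP.
- exfalso; apply: H; have [n hn] := Win_reach hw; exists n; exact/bPP.
Qed.

Definition good x y := [/\ edge x y, Win y & rk x = 0 \/ rk y < rk x].

Lemma good_ex x : Win x -> exists y, good x y.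
Proof.
move=> hw; have [hr hmin] := rk_spec hw.
case E: (rk x) hr => [|n] /=.
- move=> [_ [p [p0 hv ha]]]; exists (p 1); split; last by left.
  + by rewrite -p0; apply: hv.
  + exact: Win_tail.
- move=> [y [he hy]]; have hwy := reach_Win hy; exists y; split => //.
  by right; have [_ hm] := rk_spec hwy; have := hm _ hy; lia.
Qed.

Definition next x : pos :=
  match excluded_middle_informative (exists y, good x y) with
  | left H => proj1_sig (constructive_indefinite_description _ H)
  | right _ => x end.

Lemma next_good x : Win x -> good x (next x).
Proof.
move=> hw; rewrite /next; case: excluded_middle_informative => [H|H].
- by case: constructive_indefinite_description.
- by exfalso; apply: H; apply: good_ex.
Qed.

Definition dir x := last d0 (next x).1.

Lemma next_edge x : Win x ->
  (next x).1 = rcons x.1 (dir x) /\ @ntrans _ A x.2 (lt x.1 (dir x)) (next x).2.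
Proof.
move=> /next_good [[a [h1 h2]] _ _]; by rewrite /dir h1 last_rcons.
Qed.

Lemma next_Win x : Win x -> Win (next x).
Proof. by move=> /next_good []. Qed.

Lemma play_Win x i : Win x -> Win (iter i next x).
Proof. by move=> hw; elim: i => //= i IH; apply: next_Win. Qed.

Lemma play_acc n x : Win x -> rk x <= n -> exists m, @nacc _ A (iter m next x).2.
Proof.
elim: n x => [|n IH] x hw hr.
- have [h _] := rk_spec hw; move: hr; rewrite leqn0 => /eqP E; rewrite E in h.
  by exists 0; case: h.
- case E: (rk x) => [|r].
  + have [h _] := rk_spec hw; rewrite E in h; by exists 0; case: h.
  + have [_ hw' [|]] := next_good hw; first by rewrite E.
    move=> hlt; have hle : rk (next x) <= n by lia.
    have [m hm] := IH (next x) hw' hle.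
    by exists m.+1; rewrite iterSr.
Qed.

Lemma play_infacc x : Win x -> infacc (fun i => iter i next x).
Proof.
move=> hw n; have hw' := play_Win n hw.
have [m hm] := play_acc hw' (leqnn _); exists (m + n); first lia.
by rewrite iterD.
Qed.

Definition stream x i := dir (iter i next x).

Lemma stream_tail x i : stream x i.+1 = stream (next x) i.
Proof. by rewrite /stream iterSr. Qed.

Lemma play_accepts x (pi : nat -> inval I) t : Win x -> @ninit _ A x.2 ->
  x.1 = mkseq pi t -> (forall i, pi (t + i) = stream x i) ->
  nbw_accepts A (fun i => lt (mkseq pi (t + i)) (pi (t + i))).
Proof.
move=> hw hi h1 hs.
have hpos : forall i, (iter i next x).1 = mkseq pi (t + i).
  elim=> [|i IH]; first by rewrite addn0.
  have [e1 _] := next_edge (play_Win i hw).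
  by rewrite iterS e1 IH addnS mkseqS hs.
exists (fun i => (iter i next x).2); split => //.
- move=> i; have [_ e2] := next_edge (play_Win i hw).
  by rewrite -hpos hs.
- exact: play_infacc.
Qed.

Lemma accepts_Win (pi : nat -> inval I) t :
  nbw_accepts A (fun i => lt (mkseq pi (t + i)) (pi (t + i))) ->
  exists q, @ninit _ A q /\ Win (mkseq pi t, q).
Proof.
move=> [r [r0 hr ha]]; exists (r 0); split => //.
exists (fun i => (mkseq pi (t + i), r i)); split.
- by rewrite addn0.
- move=> i; exists (pi (t + i)); split => /=; first by rewrite addnS mkseqS.
  exact: hr.
- exact: ha.
Qed.
End Strat.
Lemma in_In (T : eqType) (x : T) l : x \in l -> List.In x l.
Proof. by elim: l => //= y l IH; rewrite inE => /orP [/eqP ->|/IH]; [left|right]. Qed.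

Lemma mkseq_prefix T (pi pi' : nat -> T) t :
  (forall m, m < t -> pi' m = pi m) -> mkseq pi' t = mkseq pi t.
Proof. by move=> H; apply/eq_in_map => m; rewrite mem_iota /= => /H. Qed.

Lemma out_at_prefix (I : finType) X (M : moore I X) pi pi' t :
  (forall m, m < t -> pi' m = pi m) -> out_at M pi' t = out_at M pi t.
Proof. by move=> H; rewrite /out_at (mkseq_prefix H). Qed.

Lemma csat_prefix_EA (I O : finType) (M : moore I (outval O)) (g : ctl I O) pi pi' t :
  isE g || isA g -> (forall m, m < t -> pi' m = pi m) ->
  csat M g pi' t -> csat M g pi t.
Proof.
case: g => // a _ hpre /=.
- move=> [p [hp h]]; exists p; split => // m hm; rewrite hp // hpre //.
- move=> h p hp; apply: h => m hm; rewrite hp // hpre //.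
Qed.

Section Fwd.
Variables (I O : finType) (Phi : ctl I O) (aut : ctl I O -> nbw (sletter I O)).
Hypothesis Haut : forall e, e \in F_exist Phi -> nbw_for (aut e) (path_of e).
Variable M : moore I (outval O).
Hypothesis HM : forall pi, csat M Phi pi 0.
Let k := kstates Phi aut.
Local Notation inv := (inval I).

Definition ext (h : seq inv) : nat -> inv := fun m => nth (d0 I) h m.
Definition truth (g : ctl I O) (h : seq inv) : bool := bP (csat M g (ext h) (size h)).

Lemma ext_mkseq (pi : nat -> inv) t m : m < t -> ext (mkseq pi t) m = pi m.
Proof. by move=> hm; rewrite /ext nth_mkseq. Qed.

Lemma truthE g pi t : isE g || isA g -> truth g (mkseq pi t) <-> csat M g pi t.
Proof.
move=> hg; rewrite /truth size_mkseq; split.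
- by move/bPP; apply: csat_prefix_EA => // m hm; rewrite ext_mkseq.
- by move=> h; apply/bPP; apply: (csat_prefix_EA hg _ h) => m hm; rewrite ext_mkseq.
Qed.

Definition outN (h : seq inv) : outval O := @mout _ _ M (foldl (@mtrans _ _ M) (minit M) h).
Definition lt (h : seq inv) (a : inv) : sletter I O := (a, (outN h, fun g => truth g h)).
Definition W (pi : nat -> inv) s := lt (mkseq pi s) (pi s).

Lemma skelE p pi t : lsat (skeleton p) (W pi) t <-> csat M p pi t.
Proof.
split.
- apply: (@tr_imp I O _ _ _ _ (W pi)) => // g _ hg t0 /= h; exact: (truthE _ _ hg).1 h.
- apply: (@tr_rev I O _ _ _ _ (W pi)) => // g _ hg t0 /= h; exact: (truthE _ _ hg).2 h.
Qed.

Definition target (h : seq inv) (e : ctl I O) : nat -> inv :=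
  match excluded_middle_informative
          (exists q : nstate (aut e), ninit q /\ Win lt (h, q)) with
  | left H => stream lt (h, proj1_sig (constructive_indefinite_description _ H))
  | right _ => fun _ => d0 I end.

Lemma target_spec h e : e \in F_exist Phi -> truth e h ->
  exists q : nstate (aut e), [/\ ninit q, Win lt (h, q) & target h e = stream lt (h, q)].
Proof.
move=> he ht; rewrite /target; case: excluded_middle_informative => [H|H].
- case: constructive_indefinite_description => q [h1 h2] /=; by exists q.
- exfalso; apply: H.
  have hE : isE e by move: he; rewrite /F_exist mem_undup mem_filter => /andP [].
  case: e hE he ht => // p _ he /bPP [pi' [hpre hp]].
  set t := size h in hpre hp.
  have hmk : mkseq pi' t = h.
    rewrite -[RHS](mkseq_nth (d0 I) h); apply: mkseq_prefix => m hm.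
    by rewrite hpre.
  have hp2 : csat M p pi' t by exact: hp.
  have := (skelE p pi' t).2 hp2; rewrite -[t]addn0 lsat_shift.
  move=> /(Haut he _).2 /accepts_Win [q [hq hw]]; exists q; split => //.
  by rewrite -hmk.
Qed.

Definition slots := 'I_k -> option (nat -> inv).

Definition Inv (h : seq inv) (S : slots) :=
  (forall j s, S j = Some s -> exists e, e \in F_exist Phi /\
      exists q : nstate (aut e), Win lt (h, q) /\ s = stream lt (h, q)) /\
  (forall j1 j2 s, S j1 = Some s -> S j2 = Some s -> j1 = j2).

Definition stepS (S : slots) (a : inv) : slots := fun j =>
  match S j with Some s => if s 0 == a then Some (fun i => s i.+1) else None
  | None => None end.

Lemma Inv_step h S a : Inv h S -> Inv (rcons h a) (stepS S a).
Proof.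
move=> [H1 H2]; split.
- move=> j s; rewrite /stepS; case E: (S j) => [s0|] //.
  case: eqP => // h0 [<-].
  have [e [he [q [hw hs]]]] := H1 _ _ E.
  exists e; split => //; exists (next lt (h, q)).2.
  have [e1 _] := next_edge hw.
  have hn : next lt (h, q) = (rcons h a, (next lt (h, q)).2).
    by rewrite -h0 hs; move: e1; case: (next lt (h, q)) => /= x y ->.
  split; first by rewrite -hn; exact: next_Win.
  apply: functional_extensionality => i; rewrite hs stream_tail -hn //.
- move=> j1 j2 s; rewrite /stepS.
  case E1: (S j1) => [s1|] //; case E2: (S j2) => [s2|] //.
  case: eqP => // h1 [<-]; case: eqP => // h2 [] hs.
  apply: (H2 _ _ s1) => //; rewrite E2; congr Some.
  apply: functional_extensionality => -[|i]; first by rewrite h1 h2.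
  by have := congr1 (fun f => f i) hs.
Qed.

Definition isNone (o : option (nat -> inv)) := if o is None then true else false.

Definition ins (h : seq inv) (S : slots) (e : ctl I O) : slots :=
  if truth e h then
    if [pick j | bP (S j = Some (target h e))] is Some _ then S
    else if [pick j | isNone (S j)] is Some j0 then
      (fun j => if j == j0 then Some (target h e) else S j)
    else S
  else S.

Lemma ins_mono h S e j s : S j = Some s -> ins h S e j = Some s.
Proof.
move=> E; rewrite /ins; case: (truth e h) => //.
case: pickP => // _; case: pickP => // j0 hj0; case: eqP => [Ej|//].
by move: hj0; rewrite -Ej E.
Qed.

Definition Lidx : seq {e : ctl I O & nstate (aut e)} :=
  flatten [seq [seq Tagged (fun e => nstate (aut e)) q | q <- enum (nstate (aut e))]
          | e <- F_exist Phi].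

Lemma size_Lidx : size Lidx = k.
Proof.
rewrite /Lidx size_flatten /shape -map_comp /k /kstates sumnE big_map.
by apply: eq_bigr => e _ /=; rewrite size_map -cardE.
Qed.

Lemma mem_Lidx e (q : nstate (aut e)) : e \in F_exist Phi ->
  Tagged (fun e => nstate (aut e)) q \in Lidx.
Proof.
move=> he; apply/flatten_mapP; exists e => //.
by apply: map_f; rewrite mem_enum.
Qed.

Lemma counting h S tau e0 (q0 : nstate (aut e0)) :
  Inv h S -> (forall j, S j <> None) -> (forall j, S j <> Some tau) ->
  e0 \in F_exist Phi -> tau = stream lt (h, q0) -> False.
Proof.
move=> [H1 H2] Hfull Hnot he0 htau.
pose x0 := Tagged (fun e => nstate (aut e)) q0.
pose strm (x : {e : ctl I O & nstate (aut e)}) := stream lt (h, tagged x).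
pose str (o : option 'I_k) := if o is Some j then odflt tau (S j) else tau.
have Hex : forall o, exists i : 'I_(size Lidx), strm (nth x0 Lidx i) = str o.
  have mk : forall e (q : nstate (aut e)), e \in F_exist Phi ->
      exists i : 'I_(size Lidx), strm (nth x0 Lidx i) = stream lt (h, q).
    move=> e q he; have hm := mem_Lidx q he.
    have hi : index (Tagged (fun e => nstate (aut e)) q) Lidx < size Lidx by rewrite index_mem.
    by exists (Ordinal hi); rewrite /= nth_index.
  case=> [j|] /=; last by rewrite htau; apply: mk.
  case E: (S j) => [s|] /=; last by have := Hfull j; rewrite E.
  have [e [he [q [_ ->]]]] := H1 _ _ E; exact: mk.
have [f Hf] := fin_all_exists Hex.
have finj : injective f.
  move=> o1 o2 hf; have := Hf o1; rewrite hf Hf; clear hf.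
  case: o1 => [j1|]; case: o2 => [j2|] //=.
  - case E1: (S j1) => [s1|]; last by have := Hfull j1; rewrite E1.
    case E2: (S j2) => [s2|]; last by have := Hfull j2; rewrite E2.
    by move=> /= hs; rewrite (H2 j1 j2 s1) // E2 hs.
  - case E1: (S j1) => [s1|]; last by have := Hfull j1; rewrite E1.
    by move=> /= hs; have := Hnot j1; rewrite E1 hs.
  - case E2: (S j2) => [s2|]; last by have := Hfull j2; rewrite E2.
    by move=> /= hs; have := Hnot j2; rewrite E2 hs.
by have := @leq_card _ _ f finj; rewrite card_option !card_ord size_Lidx ltnn.
Qed.

Lemma ins_Inv h S e : Inv h S -> e \in F_exist Phi ->
  Inv h (ins h S e) /\ (truth e h -> exists j, ins h S e j = Some (target h e)).
Proof.
move=> hI he; rewrite /ins; case ht: (truth e h); last by split.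
have [q [hq hw htg]] := target_spec he ht.
case: pickP => [j /bPP hj|hno]; first by split => // _; exists j.
case: pickP => [j0 hj0|hfree].
- split; last by move=> _; exists j0; rewrite eqxx.
  have [H1 H2] := hI; split.
  + move=> j s; case: eqP => _; last exact: H1.
    by move=> [<-]; exists e; split => //; exists q.
  + move=> j1 j2 s; case: eqP => [->|n1]; case: eqP => [->|n2] //.
    * move=> [<-] E; exfalso; have := hno j2; rewrite E => /bPP; apply.
      by [].
    * move=> E [hs]; exfalso; have := hno j1; rewrite E -hs => /bPP; apply.
      by [].
    * exact: H2.
- exfalso; apply: (counting (tau := target h e) (q0 := q) hI) => //.
  + by move=> j E; have := hfree j; rewrite E.
  + by move=> j E; have := hno j; rewrite E => /bPP; apply.
Qed.

Definition addObl h S := foldl (ins h) S (F_exist Phi).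

Lemma addObl_spec_gen l h S : Inv h S -> (forall e, e \in l -> e \in F_exist Phi) ->
  [/\ Inv h (foldl (ins h) S l),
      (forall j s, S j = Some s -> foldl (ins h) S l j = Some s) &
      (forall e, e \in l -> truth e h -> exists j, foldl (ins h) S l j = Some (target h e))].
Proof.
elim: l S => [|e l IH] S hI hl /=; first by split.
have he : e \in F_exist Phi by apply: hl; rewrite inE eqxx.
have [hI' hhas] := ins_Inv hI he.
have hl' : forall e', e' \in l -> e' \in F_exist Phi.
  by move=> e' h'; apply: hl; rewrite inE h' orbT.
have [i1 i2 i3] := IH (ins h S e) hI' hl'.
split => //.
- by move=> j s E; apply: i2; apply: ins_mono.
- move=> e' /[1!inE] /orP [/eqP ->|he'] ht; last exact: i3.
  by have [j hj] := hhas ht; exists j; apply: i2.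
Qed.

Lemma addObl_spec h S : Inv h S ->
  [/\ Inv h (addObl h S),
      (forall j s, S j = Some s -> addObl h S j = Some s) &
      (forall e, e \in F_exist Phi -> truth e h -> exists j, addObl h S j = Some (target h e))].
Proof. by move=> hI; apply: addObl_spec_gen. Qed.

Definition vout (x : seq inv * slots) : ctl I O -> 'I_k.+1 := fun e =>
  if truth e x.1 then
    (if [pick j | bP (x.2 j = Some (target x.1 e))] is Some j then inord j.+1 else ord0)
  else ord0.
Definition dout (S : slots) : 'I_k -> inv := fun j => if S j is Some s then s 0 else d0 I.

Definition Mf : moore I (extout I O k) :=
  @Moore I (extout I O k) (seq inv * slots)%type
        ([::], addObl [::] (fun _ => None))
        (fun x a => (rcons x.1 a, addObl (rcons x.1 a) (stepS x.2 a)))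
        (fun x => (outN x.1, (vout x, (dout x.2, fun a => truth a x.1)))).

Definition stAt pi t : seq inv * slots := foldl (@mtrans _ _ Mf) (minit Mf) (mkseq pi t).
Definition word pi t : (inv * extout I O k)%type := (pi t, out_at Mf pi t).

Lemma stAt_S pi t : stAt pi t.+1 =
  (rcons (stAt pi t).1 (pi t), addObl (rcons (stAt pi t).1 (pi t)) (stepS (stAt pi t).2 (pi t))).
Proof. by rewrite /stAt mkseqS foldl_rcons. Qed.

Lemma stAt_fst pi t : (stAt pi t).1 = mkseq pi t.
Proof. by elim: t => // t IH; rewrite stAt_S /= IH mkseqS. Qed.

Lemma Inv_nil : Inv [::] (fun _ => None).
Proof. by split. Qed.

Lemma stAt_Inv pi t : Inv (stAt pi t).1 (stAt pi t).2.
Proof.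
elim: t => [|t IH]; first by have [] := addObl_spec (Inv_nil).
rewrite stAt_S /=; have [] := addObl_spec (Inv_step (pi t) IH) => //.
Qed.

Lemma stAt_has pi t e : e \in F_exist Phi -> truth e (stAt pi t).1 ->
  exists j, (stAt pi t).2 j = Some (target (stAt pi t).1 e).
Proof.
case: t => [|t] he.
- by have [_ _ H] := addObl_spec (Inv_nil); apply: H.
- rewrite stAt_S /=; have [_ _ H] := addObl_spec (Inv_step (pi t) (stAt_Inv pi t)).
  exact: H.
Qed.

Lemma word_out pi t : x_out (word pi t) = out_at M pi t.
Proof. by rewrite /x_out /word /out_at -/(stAt pi t) /= stAt_fst. Qed.

Lemma word_v pi t e : x_v (word pi t) e = vout (stAt pi t) e.
Proof. by []. Qed.
Lemma word_d pi t j : x_d (word pi t) j = dout (stAt pi t).2 j.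
Proof. by []. Qed.
Lemma word_p pi t a : x_p (word pi t) a = truth a (stAt pi t).1.
Proof. by []. Qed.

Lemma F_existP' e : e \in F_exist Phi = (e \in subformulas Phi) && isE e.
Proof. by rewrite /F_exist mem_undup mem_filter andbC. Qed.
Lemma F_univP' e : e \in F_univ Phi = (e \in subformulas Phi) && isA e.
Proof. by rewrite /F_univ mem_undup mem_filter andbC. Qed.

Lemma Hst pi : forall g, g \in subformulas Phi -> isE g || isA g ->
  forall t, csat M g pi t -> x_st g (word pi t).
Proof.
move=> g hg hEA t hc; have ht := (truthE _ _ hEA).2 hc; rewrite -stAt_fst in ht.
case: g hg hEA hc ht => // p hg _ hc ht /=.
- rewrite word_v /vout ht.
  have he : CE p \in F_exist Phi by rewrite F_existP' hg.
  have [j hj] := stAt_has he ht.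
  case: pickP => [j' _|hno]; first by rewrite inordK // ltnS ltn_ord.
  by have := hno j; move=> /negP; case; apply/bPP.
Qed.

Lemma prime_rev pi f : (forall g, g \in subformulas f -> g \in subformulas Phi) ->
  forall t, csat M f pi t -> lsat (Defs.prime Phi aut f) (word pi) t.
Proof.
move=> hsub; apply: (@tr_rev I O _ _ _ _ (word pi)) => //.
- by move=> t; rewrite word_out.
- move=> g hg hEA t hc; apply: Hst => //; exact: hsub.
Qed.

Lemma sub_path e : e \in subformulas Phi ->
  forall g, g \in subformulas (path_of e) -> g \in subformulas Phi.
Proof.
move=> he g hg; apply: (subformulas_trans he).
by case: e he hg => //= a _ hg; rewrite in_cons hg orbT.
Qed.

Lemma E_obl pi e (he : e \in F_exist Phi) (j : 'I_k) t :
  x_v (word pi t) e = j.+1 ->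
  (forall m, t <= m -> (word pi m).1 = x_d (word pi m) j) ->
  lsat (Defs.prime Phi aut (path_of e)) (word pi) t.
Proof.
rewrite word_v /vout; case ht: (truth e _) => //.
case: pickP => // j' /bPP hj'; rewrite inordK; last by rewrite ltnS ltn_ord.
move=> -[hjj].
have ejj : j' = j by apply: val_inj.
rewrite ejj in hj' => hfol {hjj ejj j'}.
have [q [hq hw htg]] := target_spec he ht.
set tau := target _ e in hj' htg.
have key : forall i, (stAt pi (t + i)).2 j = Some (fun m => tau (i + m)).
  elim=> [|i IH]; first by rewrite addn0 hj'.
  have hpi : pi (t + i) = tau i.
    by have := hfol (t + i) (leq_addr _ _); rewrite word_d /dout IH addn0.
  rewrite addnS stAt_S /=.
  have [_ H _] := addObl_spec (Inv_step (pi (t + i)) (stAt_Inv pi (t + i))).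
  apply: H; rewrite /stepS IH hpi addn0 eqxx; congr Some.
  by apply: functional_extensionality => m; rewrite addSnnS.
have hs : forall i, pi (t + i) = stream lt ((stAt pi t).1, q) i.
  move=> i; rewrite -htg.
  by have := hfol (t + i) (leq_addr _ _); rewrite word_d /dout key addn0.
have hacc := play_accepts hw hq (stAt_fst pi t) hs.
have hsk := (Haut he _).1 hacc.
have : lsat (skeleton (path_of e)) (W pi) (t + 0) by rewrite lsat_shift.
rewrite addn0 skelE; apply: prime_rev.
apply: sub_path; by move: he; rewrite F_existP' => /andP [].
Qed.

Lemma In_in (T : eqType) (x : T) l : List.In x l -> x \in l.
Proof. by elim: l => //= y l IH [->|/IH h]; rewrite inE ?eqxx ?h ?orbT. Qed.

Lemma fwd_main : ltl_realisable (Phi_LTL Phi aut).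
Proof.
exists Mf => pi; split; [|split].
- by apply: prime_rev => // g hg.
- apply/LBigAnd_map => e /In_in he; cbv beta.
  apply/LBigAnd_map => j _; cbv beta.
  apply/LG_sat => t _ /=.
  case: (boolP (x_v (word pi t) e == j.+1)) => hv; [right|by left].
  case: (classic (forall m, t <= m -> (word pi m).1 = x_d (word pi m) j)) => hg.
  + right; apply: E_obl he j t (eqP hv) hg.
  + left => H; apply: hg => m hm; case: (H m hm) => [/eqP //|[m' [_ _ //]]].
- apply/LBigAnd_map => a /In_in ha; cbv beta.
  apply/LG_sat => t _ /=.
  case: (boolP (x_p (word pi t) a)) => hp; [right|by left].
  rewrite word_p in hp.
  have haA : isA a by move: ha; rewrite F_univP' => /andP [].
  have haP : a \in subformulas Phi by move: ha; rewrite F_univP' => /andP [].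
  have hc := (@truthE a pi t (introT orP (or_intror haA))).1; rewrite -stAt_fst in hc.
  case: a ha haA haP hp hc => // p _ _ haP hp hc.
  apply: prime_rev; first exact: sub_path haP.
  by have := hc hp; apply.
Qed.
End Fwd.
Section Back.
Variables (I O : finType) (Phi : ctl I O) (aut : ctl I O -> nbw (sletter I O)).
Let k := kstates Phi aut.
Variable M' : moore I (extout I O k).
Let word' (pi : nat -> inval I) : nat -> (inval I * extout I O k) :=
  fun t => (pi t, out_at M' pi t).
Hypothesis HM' : forall pi, lsat (Phi_LTL Phi aut) (word' pi) 0.

Definition Mproj : moore I (outval O) :=
  Moore (minit M') (@mtrans _ _ M') (fun s => (@mout _ _ M' s).1).

Lemma out_Mproj pi t : out_at Mproj pi t = (out_at M' pi t).1.
Proof. by []. Qed.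

Section Follow.
Variables (pi : nat -> inval I) (t : nat) (j : 'I_k).
Definition fa n (s : mstate M') : inval I :=
  if n < t then pi n else (@mout _ _ M' s).2.2.1 j.
Fixpoint fstate n : mstate M' :=
  if n is n'.+1 then mtrans (fstate n') (fa n' (fstate n')) else minit M'.
Definition pif n := fa n (fstate n).
Lemma fst_ok n : foldl (@mtrans _ _ M') (minit M') (mkseq pif n) = fstate n.
Proof. by elim: n => // n IH; rewrite mkseqS foldl_rcons IH. Qed.
Lemma pif_prefix m : m < t -> pif m = pi m.
Proof. by rewrite /pif /fa => ->. Qed.
Lemma pif_follow m : t <= m -> pif m = (out_at M' pif m).2.2.1 j.
Proof.
move=> h; rewrite /pif /fa ltnNge h /= /out_at.
by have := fst_ok m => /= ->.
Qed.
End Follow.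

Lemma HM'_parts pi :
  [/\ lsat (Defs.prime Phi aut Phi) (word' pi) 0,
   forall e, e \in F_exist Phi -> forall (j : 'I_k) t,
     x_v (word' pi t) e = j.+1 ->
     (forall m, t <= m -> (word' pi m).1 = x_d (word' pi m) j) ->
     lsat (Defs.prime Phi aut (path_of e)) (word' pi) t &
   forall a, a \in F_univ Phi -> forall t, x_p (word' pi t) a ->
     lsat (Defs.prime Phi aut (path_of a)) (word' pi) t].
Proof.
have [H1 [H2 H3]] := HM' pi; split => //.
- move=> e he j t hv hd.
  move/LBigAnd_map: H2 => /(_ e (in_In he)) /LBigAnd_map /(_ j (in_In (mem_enum _ _))) /=.
  move=> /(_ t (leq0n _)) [|[m [_ _ //]]].
  move=> [] /=; first by rewrite hv eqxx.
  move=> [] // /= H; exfalso; apply: H => m hm; left; exact/eqP/hd.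
- move=> a ha t hp.
  move/LBigAnd_map: H3 => /(_ a (in_In ha)) /= /(_ t (leq0n _)) [|[m [_ _ //]]].
  by move=> [] //; rewrite hp.
Qed.

Lemma F_existP e : e \in F_exist Phi = (e \in subformulas Phi) && isE e.
Proof. by rewrite /F_exist mem_undup mem_filter andbC. Qed.
Lemma F_univP e : e \in F_univ Phi = (e \in subformulas Phi) && isA e.
Proof. by rewrite /F_univ mem_undup mem_filter andbC. Qed.

Lemma claimC (f : ctl I O) : forall g, g \in subformulas f -> g \in subformulas Phi ->
  isE g || isA g -> forall pi t, x_st g (word' pi t) -> csat Mproj g pi t.
Proof.
have Hsub : forall (a g : ctl I O), g \in subformulas a -> a \in subformulas Phi ->
  g \in subformulas Phi.
  by move=> a g h1 h2; exact: subformulas_trans h2 h1.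
elim: f => /= [||i|i|o|o|a IHa b IHb|a IHa b IHb|a IH|a IHa b IHb|a IHa b IHb|a IH|a IH] g;
  rewrite in_cons => /orP [/eqP ->|]; rewrite ?in_nil ?mem_cat //.
all: try (move=> /orP [H|H]; [exact: IHa | exact: IHb]).
all: try (move=> H; exact: IH).
-
  move=> hP _ pi t /=; set v := x_v _ _ => hv.
  have hvk : v.-1 < k.
    have := ltn_ord ((out_at M' pi t).2.1 (CE a)); move: hv; rewrite /v /x_v /=.
    case: (nat_of_ord _) => //= n _; rewrite ltnS; exact.
  pose j := Ordinal hvk.
  pose pi' := pif pi t j.
  exists pi'; split; first by move=> m hm; exact: pif_prefix.
  have [_ HE _] := HM'_parts pi'.
  have heF : CE a \in F_exist Phi by rewrite F_existP hP.
  have := HE _ heF j t.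
  have Hout : out_at M' pi' t = out_at M' pi t by apply: out_at_prefix => m; exact: pif_prefix.
  move=> /(_ _ _) Hl.
  apply: (@tr_imp I O _ _ _ _ (word' pi')) (Hl _ _) => //.
  + move=> g' hg hEA t0 hst; apply: IH hst => //; apply: subformulas_trans hP _; by rewrite /= in_cons hg orbT.
  + rewrite /x_v /word' /= Hout; move: hv; rewrite /v /x_v /=.
    by case: (nat_of_ord _).
  + move=> m hm /=; exact: pif_follow.
-
  move=> hP _ pi t /= hp pi' hpre.
  have [_ _ HA] := HM'_parts pi'.
  have haF : CA a \in F_univ Phi by rewrite F_univP hP.
  have Hout : out_at M' pi' t = out_at M' pi t by apply: out_at_prefix.
  have := HA _ haF t; rewrite /x_p /word' /= Hout => /(_ hp) Hl.
  apply: (@tr_imp I O _ _ _ _ (word' pi')) Hl => //.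
  move=> g' hg hEA t0 hst; apply: IH hst => //; apply: subformulas_trans hP _; by rewrite /= in_cons hg orbT.
Qed.

Lemma back_main : ctl_realisable Phi.
Proof.
exists Mproj => pi.
have [H1 _ _] := HM'_parts pi.
apply: (@tr_imp I O _ _ _ _ (word' pi)) H1 => //.
move=> g hg hEA t hst; exact: (claimC hg hg hEA hst).
Qed.
End Back.

Theorem mainTheorem1 (I O : finType) (Phi : ctl I O)
  (aut : ctl I O -> nbw (sletter I O)) :
  is_state Phi ->
  (forall e, e \in F_exist Phi -> nbw_for (aut e) (path_of e)) ->
  ctl_realisable Phi <-> ltl_realisable (Phi_LTL Phi aut).
Proof.
move=> _ Haut; split.
- by move=> [M HM]; exact: (fwd_main Haut HM).
- by move=> [M' HM']; exact: (back_main HM').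
Qed.
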